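(* Let $0\le r<1$. In the RRH with redirection parameter $r$, for every fixed integer $k\ge 1$, $$\lim_{N\to\infty}\frac{\mathbb{E}[\mathcal{N}_k(N)]}{N}=\frac{1-r}{(k-r+1)(k-r)}.$$
   Context: The RRH with redirection parameter $r\in[0,1)$ is the following random hypergraph process. At size $N=1$ it has vertex set $\{v_1\}$ and edge set $\{\{v_1\}\}$. Given the hypergraph of size $N$ (vertices $v_1,\dots,v_N$, $N$ edges), choose an existing edge $e$ uniformly at random and add a new vertex $v_{N+1}$ and one new edge, as follows. If $e=\{v_1\}$, the new edge is $\{v_1,v_{N+1}\}$. Otherwise write $e=\{v_{i_1},\dots,v_{i_n}\}$ with $1=i_1<\dots<i_n$, $n\ge2$; independently, with probability $1-r$ the new edge is $e\cup\{v_{N+1}\}$ and with probability $r$ it is $\{v_{i_1},\dots,v_{i_{n-1}},v_{N+1}\}$. The degree of a vertex is the number of edges containing it; $\mathcal{N}_k(N)$ is the number of vertices of degree $k$ at size $N$. *)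

(* Defs.v *)
From HB Require Import structures.
From mathcomp Require Import all_boot all_order all_algebra.
From mathcomp Require Import all_classical all_reals.
From mathcomp Require Import topology normedtype sequences.
Set Implicit Arguments. Unset Strict Implicit. Unset Printing Implicit Defensive.
Import Order.TTheory GRing.Theory Num.Theory.
Local Open Scope ring_scope.

(* A hypergraph of size N: vertices are 1..N, and the state is the list of its
   N edges, each edge being the increasing list of its vertex indices. *)
Definition hgraph := seq (seq nat).

Definition rrh_init : hgraph := [:: [:: 1%N]].

Definition rrh_step {R : realType} (r : R) (H : hgraph) : seq (R * hgraph) :=
  let N := size H in
  flatten [seq
    (if e == [:: 1%N] then [:: (N%:R^-1, rcons H [:: 1%N; N.+1])]
     else [:: ((1 - r) / N%:R, rcons H (rcons e N.+1));
              (r / N%:R, rcons H (rcons (take (size e).-1 e) N.+1))])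
  | e <- H].

(* rrh_dist r n : the law (as a weighted list of outcomes) of the RRH of size n.+1. *)
Fixpoint rrh_dist {R : realType} (r : R) (n : nat) : seq (R * hgraph) :=
  match n with
  | 0 => [:: (1, rrh_init)]
  | n'.+1 => flatten [seq [seq (pH.1 * q.1, q.2) | q <- rrh_step r pH.2]
                     | pH <- rrh_dist r n']
  end.

Definition hdeg (H : hgraph) (v : nat) : nat := count (fun e => v \in e) H.

Definition numdeg (H : hgraph) (k : nat) : nat :=
  count (fun v => hdeg H v == k) (iota 1 (size H)).

(* E[N_k(N)] for N >= 1 *)
Definition expected_numdeg {R : realType} (r : R) (k N : nat) : R :=
  \sum_(pH <- rrh_dist r N.-1) pH.1 * (numdeg pH.2 k)%:R.

(* Main.v *)
Require Import Defs.
From HB Require Import structures.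
From mathcomp Require Import all_boot all_order all_algebra.
From mathcomp Require Import all_classical all_reals.
From mathcomp Require Import topology normedtype sequences.
From mathcomp Require Import ring lra zify.
Import Order.TTheory GRing.Theory Num.Theory numFieldNormedType.Exports.
Local Open Scope classical_set_scope.
Local Open Scope ring_scope.

Section Comb.
Local Open Scope nat_scope.

Definition Inv (H : hgraph) : Prop :=
  (forall e, e \in H -> [/\ head 0 e = 1, sorted ltn e & forall x, x \in e -> x <= size H]) /\
  (forall v, 1 <= v <= size H -> count (fun e => last 0 e == v) H = 1).

Definition EP (N : nat) (e : seq nat) : Prop :=
  [/\ head 0 e = 1, sorted ltn e, forall x, x \in e -> x <= N.+1 & last 0 e = N.+1].

Lemma take_belast (x : nat) s : take (size (x :: s)).-1 (x :: s) = belast x s.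
Proof. by elim: s x => [|y s IH] x //=; rewrite -IH. Qed.

Lemma headE e : head 0 e = 1 -> exists t, e = 1 :: t.
Proof. by case: e => [|x t] //= ->; exists t. Qed.

Lemma last_in e : head 0 e = 1 -> last 0 e \in e.
Proof. by move=> /headE [t ->]; exact: mem_last. Qed.

Lemma EP_one N : 1 <= N -> EP N [:: 1; N.+1].
Proof.
move=> hN; split => //=.
- by rewrite andbT ltnS.
- move=> x; rewrite !inE => /orP [/eqP -> | /eqP ->] //; lia.
Qed.

Lemma EP_ext N e : head 0 e = 1 -> sorted ltn e -> (forall x, x \in e -> x <= N) ->
  EP N (rcons e N.+1).
Proof.
move=> /headE [t ->] hs hb; split.
- by [].
- move: hs => /= hs; rewrite rcons_path hs /= ltnS; apply: hb; exact: mem_last.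
- move=> x; rewrite mem_rcons inE => /orP [/eqP -> //| /hb]; lia.
- by rewrite /= last_rcons.
Qed.

Lemma EP_red N e : e != [:: 1] -> head 0 e = 1 -> sorted ltn e ->
  (forall x, x \in e -> x <= N) -> EP N (rcons (take (size e).-1 e) N.+1).
Proof.
move=> ne /headE [t et] hs hb; subst e.
case: t ne hs hb => [|y t] // _ hs hb.
rewrite take_belast /=.
have hs' : path ltn 1 (belast y t).
  have : path ltn 1 (y :: t) := hs.
  by rewrite (lastI y t) rcons_path => /andP [].
split => //.
- rewrite /= rcons_path hs' /= ltnS; apply: hb.
  have := mem_last 1 (belast y t); rewrite inE => /orP [/eqP -> |]; first by rewrite inE eqxx.
  by move=> h; rewrite inE lastI mem_rcons inE h !orbT.
- move=> x; rewrite inE mem_rcons inE => /orP [/eqP -> //|/orP [/eqP ->|h]].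
  + have : 1 <= N by apply: hb; rewrite inE eqxx.
    lia.
  + have : x \in 1 :: y :: t by rewrite inE lastI mem_rcons inE h !orbT.
    move/hb; lia.
- by rewrite /= last_rcons.
Qed.

Lemma Inv_rcons H e' : Inv H -> EP (size H) e' -> Inv (rcons H e').
Proof.
move=> [h1 h2] [eh es eb el]; split.
- move=> e; rewrite size_rcons mem_rcons inE => /orP [/eqP -> //| he].
  have [a b c] := h1 e he; split => // x /c; lia.
- move=> v; rewrite size_rcons -cats1 count_cat /= addn0 el => /andP [hv1 hv2].
  have [hv | hv] := leqP v (size H).
    rewrite h2 ?hv1 ?hv //; case: eqP => //; lia.
  have -> : v = (size H).+1 by lia.
  rewrite eqxx addn1; congr S; apply/eqP; rewrite -leqn0 leqNgt -has_count.
  apply/hasPn => e he /=; have [a b c] := h1 e he.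
  have := c _ (last_in e a); case: eqP => // ->; lia.
Qed.

Lemma Inv_init : Inv rrh_init.
Proof.
split.
- by move=> e; rewrite inE => /eqP ->; split => // x; rewrite inE => /eqP ->.
- by move=> v /= hv; have -> : v = 1 by lia.
Qed.

Lemma hdeg_rcons H e v : hdeg (rcons H e) v = hdeg H v + (v \in e).
Proof. by rewrite /hdeg -cats1 count_cat /= addn0. Qed.

Lemma hdeg_new H : Inv H -> hdeg H (size H).+1 = 0.
Proof.
move=> [h1 _]; apply/eqP; rewrite -leqn0 leqNgt -has_count.
apply/hasPn => e he /=; have [a b c] := h1 e he.
by apply/negP => /c; lia.
Qed.

Lemma hdeg_one H : Inv H -> hdeg H 1 = size H.
Proof.
move=> [h1 _]; rewrite /hdeg -(count_predT H); apply: eq_in_count => e he /=.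
have [a _ _] := h1 e he; have [t ->] := headE e a; by rewrite inE eqxx.
Qed.


End Comb.

Section Real.
Local Open Scope ring_scope.
Variables (R : realType) (r : R).

Lemma sum_const_seq (T : Type) (s : seq T) (c : R) : \sum_(x <- s) c = (size s)%:R * c.
Proof.
elim: s => [|x s IH]; first by rewrite big_nil mul0r.
by rewrite big_cons IH /= -natr1 mulrDl mul1r addrC.
Qed.

Lemma count_natr (T : Type) (p : pred T) (s : seq T) :
  (count p s)%:R = \sum_(x <- s) (p x)%:R :> R.
Proof.
elim: s => [|x s IH]; first by rewrite big_nil.
by rewrite big_cons /= natrD IH.
Qed.

Lemma step_sum (H : hgraph) (G : hgraph -> R) :
  \sum_(q <- rrh_step r H) q.1 * G q.2 =
  \sum_(e <- H) (if e == [:: 1%N] then G (rcons H [:: 1%N; (size H).+1])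
     else (1 - r) * G (rcons H (rcons e (size H).+1)) +
          r * G (rcons H (rcons (take (size e).-1 e) (size H).+1))) / (size H)%:R.
Proof.
rewrite /rrh_step big_flatten big_map; apply: eq_bigr => e _.
case: ifP => _; rewrite !big_cons big_nil /=; ring.
Qed.

Lemma step_out (H : hgraph) q : Inv H -> q \in rrh_step r H ->
  exists e', q.2 = rcons H e' /\ EP (size H) e'.
Proof.
move=> [h1 h2]; rewrite /rrh_step => /flattenP [s /mapP [e he ->]].
have [a b c] := h1 e he.
case: ifP => He; rewrite !inE.
- move=> /eqP -> /=; exists [:: 1%N; (size H).+1]; split => //.
  apply: EP_one; apply: c; have [t ->] := headE e a; by rewrite inE eqxx.
- move=> /orP [/eqP -> | /eqP ->] /=.
  + by exists (rcons e (size H).+1); split => //; exact: EP_ext.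
  + exists (rcons (take (size e).-1 e) (size H).+1); split => //.
    by apply: EP_red => //; rewrite He.
Qed.

Lemma step_mass (H : hgraph) : (0 < size H)%N -> \sum_(q <- rrh_step r H) q.1 = 1.
Proof.
move=> hN.
transitivity (\sum_(q <- rrh_step r H) q.1 * (fun _ => 1) q.2).
  by apply: eq_bigr => q _; rewrite mulr1.
rewrite (step_sum H (fun _ => (1 : R))).
transitivity (\sum_(e <- H) ((size H)%:R^-1 : R)).
  by apply: eq_bigr => e _; case: ifP => _; ring.
rewrite sum_const_seq divff //; by rewrite pnatr_eq0 -lt0n.
Qed.

Lemma beta_eq (H : hgraph) e v (X D : R) : Inv H -> e \in H ->
  (2 <= v <= size H)%N ->
  (if e == [:: 1%N] then X + (v \in [:: 1%N; (size H).+1])%:R * D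
   else (1 - r) * (X + (v \in rcons e (size H).+1)%:R * D) +
        r * (X + (v \in rcons (take (size e).-1 e) (size H).+1)%:R * D))
  = X + ((v \in e)%:R - r * (last 0%N e == v)%:R) * D.
Proof.
move=> [h1 _] he hv; have [a b _] := h1 e he.
have [t et] := headE e a.
have vN : (v == (size H).+1) = false by apply/eqP; lia.
case: ifP => He.
- move/eqP: He => ->; rewrite !inE vN /=.
  have -> : (v == 1%N) = false by apply/eqP; lia.
  by rewrite eq_sym (_ : (v == 1%N) = false) /=; [ring | apply/eqP; lia].
- rewrite !mem_rcons !inE vN /=.
  have hu : uniq e by exact: (sorted_uniq ltn_trans ltnn).
  move: hu; rewrite et take_belast.
  rewrite [in X in uniq X](lastI 1%N t) rcons_uniq.
  rewrite (lastI 1%N t) !mem_rcons !inE last_rcons.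
  case: (eqVneq v (last 1%N t)) => [->|ne] /=.
    move=> /andP [/negbTE -> _] /=.
    ring.
  case: (v \in belast 1%N t) => _ /=; ring.
Qed.

Lemma dec (d k : nat) (b : bool) : (1 <= k)%N ->
  ((d + b == k)%N)%:R = (d == k)%:R + b%:R * ((d == k.-1)%:R - (d == k)%:R) :> R.
Proof.
move=> hk; case: b => /=; last by rewrite addn0 mul0r addr0.
rewrite mul1r addrC subrK; congr (_%:R); apply/eqP/eqP; lia.
Qed.


Lemma vert_step (H : hgraph) v k : Inv H -> (2 <= v <= size H)%N -> (1 <= k)%N ->
  \sum_(q <- rrh_step r H) q.1 * ((hdeg q.2 v == k)%N)%:R =
  ((hdeg H v == k)%N)%:R * (1 - (k%:R - r) / (size H)%:R) +
  ((hdeg H v == k.-1)%N)%:R * ((k.-1)%:R - r) / (size H)%:R.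
Proof.
move=> hI hv hk.
set N := size H; set d := hdeg H v.
have N0 : (N%:R : R) != 0 by rewrite pnatr_eq0 /N; lia.
set X := ((d == k)%N)%:R : R.
set D := ((d == k.-1)%N)%:R - X : R.
rewrite (step_sum H (fun H0 => ((hdeg H0 v == k)%N)%:R)) -/N.
transitivity (\sum_(e <- H) (X + ((v \in e)%:R - r * (last 0%N e == v)%:R) * D) / N%:R).
  apply: eq_big_seq => e he; rewrite -(beta_eq H e v X D hI he hv).
  by rewrite !hdeg_rcons !dec.
rewrite -mulr_suml big_split /= sum_const_seq -mulr_suml big_split /= sumrN.
rewrite -mulr_sumr -!count_natr.
have -> : count (fun e => last 0%N e == v) H = 1%N by apply: hI.2; lia.
rewrite -/(hdeg H v) -/d -/N /D /X.
have hk1 : k.-1%:R = k%:R - 1 :> R by rewrite -{2}(prednK hk) -natr1 addrK.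
have [dk|nk] := eqVneq d k.
  have -> : (d == k.-1) = false by apply/eqP; rewrite dk; lia.
  rewrite dk /=; field; exact: N0.
have [dk1|nk1] := eqVneq d k.-1.
  rewrite dk1 /=; field; exact: N0.
rewrite /=; field; exact: N0.
Qed.

Definition Mk (H : hgraph) k := count (fun v => hdeg H v == k) (iota 2 (size H).-1).

Lemma Mk_out (H : hgraph) e' k : Inv H -> (0 < size H)%N -> EP (size H) e' ->
  (Mk (rcons H e') k)%:R = \sum_(v <- iota 2 (size H).-1) ((hdeg (rcons H e') v == k)%N)%:R
     + ((k == 1)%N)%:R :> R.
Proof.
move=> hI N0 [eh es eb el].
rewrite /Mk size_rcons /=.
have -> : iota 2 (size H) = iota 2 (size H).-1 ++ [:: (size H).+1].
  have E : size H = ((size H).-1 + 1)%N by lia.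
  rewrite {1}E iotaD; congr (_ ++ _); rewrite /=; congr [:: _]; lia.
rewrite count_cat natrD count_natr.
congr (_ + _); rewrite /= addn0 hdeg_rcons.
by rewrite hdeg_new // -el last_in // eq_sym.
Qed.

Lemma mk_step (H : hgraph) k : Inv H -> (0 < size H)%N -> (1 <= k)%N ->
  \sum_(q <- rrh_step r H) q.1 * (Mk q.2 k)%:R =
  (Mk H k)%:R * (1 - (k%:R - r) / (size H)%:R) +
  (Mk H k.-1)%:R * ((k.-1)%:R - r) / (size H)%:R + ((k == 1)%N)%:R.
Proof.
move=> hI N0 hk.
transitivity (\sum_(q <- rrh_step r H) (q.1 *
   (\sum_(v <- iota 2 (size H).-1) ((hdeg q.2 v == k)%N)%:R + ((k == 1)%N)%:R))).
  apply: eq_big_seq => q hq; have [e' [-> he']] := step_out H q hI hq.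
  by rewrite Mk_out.
under eq_bigr do rewrite mulrDr mulr_sumr.
rewrite big_split /= -mulr_suml step_mass // mul1r exchange_big /=.
congr (_ + _).
transitivity (\sum_(v <- iota 2 (size H).-1)
  (((hdeg H v == k)%N)%:R * (1 - (k%:R - r) / (size H)%:R) +
  ((hdeg H v == k.-1)%N)%:R * ((k.-1)%:R - r) / (size H)%:R)).
  apply: eq_big_seq => v; rewrite mem_iota => hv; apply: vert_step => //; lia.
rewrite big_split /= -mulr_suml.
under [X in _ + X = _]eq_bigr do rewrite -mulrA.
by rewrite -mulr_suml /Mk !count_natr mulrA.
Qed.

Lemma Mk0 (H : hgraph) : Inv H -> Mk H 0 = 0%N.
Proof.
move=> [h1 h2]; apply/eqP; rewrite -leqn0 leqNgt -has_count; apply/hasPn => v.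
rewrite mem_iota => hv /=.
have : count (fun e => last 0%N e == v) H = 1%N by apply: h2; lia.
move=> hc; have : has (fun e => last 0%N e == v) H by rewrite has_count hc.
move=> /hasP [e he /eqP hl].
have [a _ _] := h1 e he.
rewrite /hdeg -lt0n -has_count; apply/hasP; exists e => //.
by rewrite -hl last_in.
Qed.

Lemma numdeg_Mk (H : hgraph) k : Inv H -> (0 < size H)%N ->
  numdeg H k = ((size H == k) + Mk H k)%N.
Proof.
move=> hI N0; rewrite /numdeg /Mk -{1}(prednK N0) /= hdeg_one //.
Qed.

Lemma dist_sum n (G : hgraph -> R) :
  \sum_(pH <- rrh_dist r n.+1) pH.1 * G pH.2 =
  \sum_(pH <- rrh_dist r n) pH.1 * \sum_(q <- rrh_step r pH.2) q.1 * G q.2.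
Proof.
rewrite /= big_flatten big_map; apply: eq_bigr => pH _.
by rewrite big_map big_distrr; apply: eq_bigr => q _ /=; rewrite mulrA.
Qed.

Lemma dist_inv n pH : pH \in rrh_dist r n -> size pH.2 = n.+1 /\ Inv pH.2.
Proof.
elim: n pH => [|n IH] pH.
  by rewrite inE => /eqP -> /=; split => //; exact: Inv_init.
move=> /flattenP [s /mapP [pH0 h0 ->]] /mapP [q hq ->] /=.
have [s0 i0] := IH _ h0.
have [e' [-> he']] := step_out pH0.2 q i0 hq.
by rewrite size_rcons s0; split => //; apply: Inv_rcons => //; rewrite s0.
Qed.

Lemma dist_mass n : \sum_(pH <- rrh_dist r n) pH.1 = 1.
Proof.
elim: n => [|n IH]; first by rewrite /= big_cons big_nil addr0.
transitivity (\sum_(pH <- rrh_dist r n.+1) pH.1 * (fun _ => (1 : R)) pH.2).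
  by apply: eq_bigr => q _; rewrite mulr1.
rewrite (dist_sum n (fun _ => (1 : R))) -[RHS]IH; apply: eq_big_seq => pH hp.
have [s0 _] := dist_inv n pH hp.
rewrite -[RHS]mulr1; congr (_ * _).
under eq_bigr do rewrite mulr1.
by apply: step_mass; rewrite s0.
Qed.

Definition xk k n := \sum_(pH <- rrh_dist r n) pH.1 * (Mk pH.2 k)%:R.

Lemma xk_rec k n : (1 <= k)%N ->
  xk k n.+1 = xk k n * (1 - (k%:R - r) / n.+1%:R) +
    (xk k.-1 n * ((k.-1)%:R - r) / n.+1%:R + ((k == 1)%N)%:R).
Proof.
move=> hk; rewrite /xk (dist_sum n (fun H => (Mk H k)%:R)).
transitivity (\sum_(pH <- rrh_dist r n) (pH.1 * (Mk pH.2 k)%:R * (1 - (k%:R - r) / n.+1%:R)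
   + (pH.1 * (Mk pH.2 k.-1)%:R * (((k.-1)%:R - r) / n.+1%:R) + pH.1 * ((k == 1)%N)%:R))).
  apply: eq_big_seq => pH hp; have [s0 i0] := dist_inv n pH hp.
  rewrite mk_step // ?s0 //; ring.
rewrite !big_split /= -!mulr_suml dist_mass mul1r.
by rewrite mulrA.
Qed.

Lemma xk0 n : xk 0 n = 0.
Proof.
rewrite /xk big_seq big1 // => pH hp; have [_ i0] := dist_inv n pH hp.
by rewrite Mk0 // mulr0.
Qed.

Lemma expected_xk k n : expected_numdeg r k n.+1 = xk k n + ((n.+1 == k)%N)%:R.
Proof.
rewrite /expected_numdeg /= /xk.
transitivity (\sum_(pH <- rrh_dist r n) (pH.1 * (Mk pH.2 k)%:R + pH.1 * ((n.+1 == k)%N)%:R)).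
  apply: eq_big_seq => pH hp; have [s0 i0] := dist_inv n pH hp.
  by rewrite numdeg_Mk // ?s0 // natrD mulrDr addrC.
by rewrite big_split /= -mulr_suml dist_mass mul1r.
Qed.

End Real.

Section An.
Variable R : realType.

Lemma cesaro_bound (z e : R^nat) (n1 : nat) :
  (forall n, (n1 <= n)%N -> `|z n.+1| <= `|z n| + `|e n|) ->
  forall m, `|z (m + n1)%N| <= `|z n1| + \sum_(0 <= i < m + n1) `|e i|.
Proof.
move=> H; elim=> [|m IH].
  rewrite add0n lerDl; apply: sumr_ge0 => i _; exact: normr_ge0.
rewrite addSn big_nat_recr //= addrA.
apply: le_trans (H _ (leq_addl _ _)) _; exact: lerD.
Qed.

Lemma recL (y b : R^nat) (c beta : R) : 0 <= c ->
  (forall n, y n.+1 = y n * (1 - c / n.+1%:R) + b n) ->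
  b @ \oo --> beta ->
  (fun n => y n / n.+1%:R) @ \oo --> beta / (1 + c).
Proof.
move=> c0 rec bcv.
set a := beta / (1 + c).
have c1 : 1 + c != 0 by apply/lt0r_neq0; lra.
pose z n := y n - a * n.+1%:R.
pose e n := b n - beta.
have zrec n : z n.+1 = z n * (1 - c / n.+1%:R) + e n.
  rewrite /z /e rec /a; rewrite -!natr1.
  field; apply/andP; split => //.
  by apply/lt0r_neq0; rewrite ltr_wpDl.
have ecv : e @ \oo --> 0.
  by rewrite -(subrr beta); apply: cvgB => //; exact: cvg_cst.
have aecv : arithmetic_mean (fun n => `|e n|) @ \oo --> 0.
  apply: cesaro; rewrite -(@normr0 _ R); exact: cvg_norm.
pose n1 := Num.Def.archi_bound c.
have Hb n : (n1 <= n)%N -> `|z n.+1| <= `|z n| + `|e n|.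
  move=> hn; rewrite zrec (le_trans (ler_normD _ _)) // lerD2r normrM.
  rewrite -[leRHS]mulr1 ler_wpM2l //.
  have hcn : c <= n.+1%:R.
    apply: le_trans (ltW (archi_boundP c0)) _; rewrite ler_nat; lia.
  have np : 0 < n.+1%:R :> R by rewrite ltr0n.
  have h1 : c / n.+1%:R <= 1 by rewrite ler_pdivrMr // mul1r.
  have h2 : 0 <= c / n.+1%:R by apply: divr_ge0 => //; exact: ltW.
  move: h1 h2; set t := c / _ => h1 h2.
  rewrite ger0_norm; lra.
have Hz := @cesaro_bound z e n1 Hb.
have zcv : (fun n => z n / n.+1%:R) @ \oo --> 0.
  apply/norm_cvg0P.
  apply: (@squeeze_cvgr _ _ _ _ (fun=> 0)
     (fun n => `|z n1| * harmonic n + arithmetic_mean (fun n => `|e n|) n)).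
  - exists n1 => // n /= hn; apply/andP; split; first exact: normr_ge0.
    have := Hz (n - n1)%N; rewrite subnK // => hz.
    rewrite normrM normfV (ger0_norm (ler0n _ _)) /= mulrC.
    rewrite /arithmetic_mean /= seriesEnat /= [_ / _]mulrC -mulrDr ler_wpM2l //.
      by rewrite invr_ge0.
    apply: le_trans hz _; rewrite lerD2l big_nat_recr //= lerDl.
    exact: normr_ge0.
  - exact: cvg_cst.
  - rewrite -[0]addr0; apply: cvgD => //.
    rewrite -(mulr0 `|z n1|); apply: cvgMr; exact: cvg_harmonic.
have -> : (fun n => y n / n.+1%:R) = (fun n => a + z n / n.+1%:R).
  apply: funext => n; rewrite /z; field.
  by apply/lt0r_neq0; rewrite ltr_pwDl.
rewrite -[X in _ --> X]addr0; apply: cvgD => //; exact: cvg_cst.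
Qed.
End An.

Arguments xk {R} r k n.
Arguments xk_rec {R} r k n.
Arguments xk0 {R} r n.
Arguments expected_xk {R} r k n.
Arguments recL {R} [y b c beta].

Section Final.
Variables (R : realType) (r : R).
Hypotheses (hr0 : 0 <= r) (hr1 : r < 1).

Let a (j : nat) : R := (1 - r) / ((j%:R - r + 1) * (j%:R - r)).

Lemma xk_lim j : (1 <= j)%N -> (fun n => xk r j n / n.+1%:R) @ \oo --> a j.
Proof.
have h0 := hr0; have h1 := hr1.
elim: j => [//|j IH] _.
have c0 : 0 <= j.+1%:R - r.
  have : 1 <= j.+1%:R :> R by rewrite ler1n.
  by move=> h; rewrite subr_ge0 (le_trans (ltW hr1)).
have hrec : forall n, xk r j.+1 n.+1 = xk r j.+1 n * (1 - (j.+1%:R - r) / n.+1%:R)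
    + (xk r j n * (j%:R - r) / n.+1%:R + ((j.+1 == 1)%N)%:R).
  by move=> n; rewrite xk_rec.
have jR : 0 <= j%:R :> R by apply: ler0n.
have [j0|jpos] := eqVneq j 0%N.
  subst j.
  have -> : a 1 = 1 / (1 + (1%:R - r)).
    rewrite /a; field; apply/andP; split; apply/lt0r_neq0; lra.
  apply: (recL c0 hrec).
  have -> : (fun n => xk r 0 n * (0%:R - r) / n.+1%:R + ((1 == 1)%N)%:R) = (fun=> 1).
    by apply: funext => n; rewrite xk0 !mul0r add0r.
  exact: cvg_cst.
have j1 : 1 <= j%:R :> R by rewrite ler1n lt0n.
have -> : a j.+1 = (a j * (j%:R - r)) / (1 + (j.+1%:R - r)).
  rewrite /a -natr1; field.
  by rewrite !(lt0r_neq0 _) //; lra.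
apply: (recL c0 hrec).
have -> : (fun n => xk r j n * (j%:R - r) / n.+1%:R + ((j.+1 == 1)%N)%:R)
   = (fun n => (xk r j n / n.+1%:R) * (j%:R - r)).
  apply: funext => n /=; rewrite (_ : (j.+1 == 1)%N = false); last by apply/eqP; lia.
  by rewrite addr0 mulrAC.
apply: cvgM; [apply: IH; lia | exact: cvg_cst].
Qed.

Lemma ind_lim (k : nat) : (fun n => ((n.+1 == k)%N)%:R / n.+1%:R) @ \oo --> (0 : R).
Proof.
apply: (@squeeze_cvgr _ _ _ _ (fun=> 0) (@harmonic R)).
- exists 0%N => // n _ /=; case: (_ == _) => /=.
    by rewrite mul1r invr_ge0 ler0n lexx.
  by rewrite mul0r lexx invr_ge0 ler0n.
- exact: cvg_cst.
- exact: cvg_harmonic.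
Qed.

End Final.

Theorem mainTheorem14 (R : realType) (r : R) (hr0 : 0 <= r) (hr1 : r < 1)
  (k : nat) (hk : (1 <= k)%N) :
  (fun N : nat => expected_numdeg r k N / N%:R) @ \oo -->
    (1 - r) / ((k%:R - r + 1) * (k%:R - r)).
Proof.
rewrite -cvg_shiftS /=.
have -> : (fun n : nat => expected_numdeg r k n.+1 / n.+1%:R) =
  (fun n => xk r k n / n.+1%:R + ((n.+1 == k)%N)%:R / n.+1%:R).
  by apply: funext => n; rewrite expected_xk mulrDl.
have H := cvgD (xk_lim R r hr0 hr1 k hk) (ind_lim R k).
rewrite addr0 in H; exact: H.
Qed.
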